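(* Assume the setup in the context and let $\preceq$ be the total order on $X$ given by: $u^*_{t,s}\prec u_{j,i}$ for all indices, $u_{t,s}\prec u_{j,i}$ iff $(t,s)<(j,i)$ lexicographically, and $u^*_{t,s}\prec u^*_{j,i}$ iff $(t,s)<(j,i)$ lexicographically, extended degree-lexicographically to monomials. Then $R$ is not a Gröbner basis of $I$ with respect to $\preceq$ (i.e. the tips of elements of $R$ do not generate the monoid ideal of tips of nonzero elements of $I$). In particular $R$ is not a universal Gröbner basis of $I$.
   Context: Let $k$ be a field and $n\ge 2$ an integer; write $[n]=\{1,\dots,n\}$ and $r(i)=n+1-i$. Let $X=\{u_{j,i},u^*_{j,i}:(j,i)\in[n]^2\}$ be a set of $2n^2$ distinct symbols and let $*$ be the involution of $X$ exchanging $u_{j,i}$ and $u^*_{j,i}$. Let $k\langle X\rangle$ be the free unital $k$-algebra on $X$. For an $n\times n$ matrix $v=(v_{j,i})$ with entries in $X$ define $v^t_{j,i}=v_{i,j}$, $v^\star_{j,i}=(v_{r(j),r(i)})^*$, $v^\dagger_{j,i}=(v_{r(i),r(j)})^*$. Let $u=(u_{j,i})$ and $M=\{u,u^t,u^\star,u^\dagger\}$. Let $I$ be the two-sided ideal generated by $R=\{\sum_{s=1}^n v_{j,r(s)}v^\dagger_{s,r(i)}-\delta_{j,i}1: v\in M,(j,i)\in[n]^2\}$ (these are exactly the relations $uu^{*T}=1$-type unitarity relations: $\sum_s u_{j,s}u^*_{i,s}=\delta_{j,i}$, $\sum_s u_{s,j}u^*_{s,i}=\delta_{j,i}$, $\sum_s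 u^*_{s,j}u_{s,i}=\delta_{j,i}$, $\sum_s u^*_{j,s}u_{i,s}=\delta_{j,i}$). A Gröbner basis of $I$ with respect to a monomial order is a subset $G\subseteq I$ such that the leading monomials of elements of $G$ generate, as a two-sided monoid ideal of the free monoid on $X$, the set of leading monomials of all nonzero elements of $I$. *)

(* Defs.v *)
From mathcomp Require Import all_boot all_algebra.
Set Implicit Arguments. Unset Strict Implicit. Unset Printing Implicit Defensive.
Import GRing.Theory.
Local Open Scope ring_scope.

(* Alphabet X: (false, j, i) = u_{j,i}, (true, j, i) = u^*_{j,i}; indices are
   0-based, i.e. 'I_n stands for [n] via i |-> i+1. *)
Definition sym (n : nat) : finType := (bool * 'I_n * 'I_n)%type.
Definition word (n : nat) := seq (sym n).

Definition ustar {n} (x : sym n) : sym n := (~~ x.1.1, x.1.2, x.2).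
(* r(i) = n+1-i in 1-based indexing, i.e. n-1-i in 0-based *)
Definition rr {n} (i : 'I_n) : 'I_n := rev_ord i.

Definition mat n := 'I_n -> 'I_n -> sym n.
Definition u_mat n : mat n := fun j i => (false, j, i).
Definition tr_mat n (v : mat n) : mat n := fun j i => v i j.
Definition star_mat n (v : mat n) : mat n := fun j i => ustar (v (rr j) (rr i)).
Definition dag_mat n (v : mat n) : mat n := fun j i => ustar (v (rr i) (rr j)).

Definition Mmat n (a : 'I_4) : mat n :=
  match val a with
  | 0 => @u_mat n
  | 1 => tr_mat (@u_mat n)
  | 2 => star_mat (@u_mat n)
  | _ => dag_mat (@u_mat n)
  end.

(* Elements of k<X> represented as formal finite sums  sum c_t * w_t ;
   the actual polynomial is the coefficient function [coef p]. *)
Definition fpoly (k : fieldType) n := seq (k * word n).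
Definition coef {k : fieldType} {n} (p : fpoly k n) (w : word n) : k :=
  \sum_(t <- p) (if t.2 == w then t.1 else 0).
Definition fmul {k : fieldType} {n} (p q : fpoly k n) : fpoly k n :=
  [seq (a.1 * b.1, a.2 ++ b.2) | a <- p, b <- q].
Definition fmono {k : fieldType} {n} (w : word n) : fpoly k n := [:: (1, w)].

Definition rel {k : fieldType} n (a : 'I_4) (j i : 'I_n) : fpoly k n :=
  [seq (1, [:: @Mmat n a j (rr s); dag_mat (@Mmat n a) s (rr i)]) | s <- enum 'I_n]
  ++ (if j == i then [:: (-1, [::])] else [::]).

Definition Ridx n := ('I_4 * 'I_n * 'I_n)%type.
Definition relR {k : fieldType} n (x : Ridx n) : fpoly k n := @rel k n x.1.1 x.1.2 x.2.

Definition inI {k : fieldType} n (f : word n -> k) : Prop :=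
  exists L : seq (k * word n * Ridx n * word n),
    forall w, f w = \sum_(t <- L)
        t.1.1.1 * coef (fmul (fmul (fmono t.1.1.2) (@relR k n t.1.2)) (fmono t.2)) w.

(* The order on X: all u^* below all u; within each kind lexicographic in (j,i). *)
Definition rk {n} (x : sym n) : nat :=
  (if x.1.1 then 0 else n * n) + (val x.1.2 * n + val x.2).

Fixpoint lexlt {n} (a b : word n) : bool :=
  match a, b with
  | x :: a', y :: b' => (rk x < rk y)%N || ((x == y) && lexlt a' b')
  | _, _ => false
  end.

Definition deglex_lt {n} (a b : word n) : bool :=
  (size a < size b)%N || ((size a == size b) && lexlt a b).
Definition deglex_le {n} (a b : word n) : bool := (a == b) || deglex_lt a b.

Definition is_tip {k : fieldType} {n} (f : word n -> k) (m : word n) : Prop :=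
  f m != 0 /\ forall m', f m' != 0 -> deglex_le m' m.

Definition R_is_groebner (k : fieldType) n : Prop :=
  forall (f : word n -> k) (m : word n), @inI k n f -> is_tip f m ->
    exists (x : Ridx n) (mr a b : word n),
      is_tip (coef (@relR k n x)) mr /\ m = a ++ mr ++ b.

(* Main.v *)
Require Import Defs.
From mathcomp Require Import all_boot all_algebra zify.
Set Implicit Arguments. Unset Strict Implicit. Unset Printing Implicit Defensive.
Import GRing.Theory.
Local Open Scope ring_scope.

Definition wd n (a : 'I_4) (j i s : 'I_n) : word n :=
  [:: Mmat a j (rr s); dag_mat (Mmat a) s (rr i)].

Lemma coef_fmul3 (k : fieldType) n (a b : word n) (p : fpoly k n) w :
  coef (fmul (fmul (fmono a) p) (fmono b)) w =
  \sum_(t <- p) (if a ++ t.2 ++ b == w then t.1 else 0).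
Proof.
rewrite /coef /fmul /fmono /=; elim: p => [|t p IH] /=; first by rewrite !big_nil.
by rewrite !big_cons /= IH catA mul1r mulr1.
Qed.

Lemma coef3_rel (k : fieldType) n (a b : word n) A (j i : 'I_n) w :
  coef (fmul (fmul (fmono a) (@Defs.rel k n A j i)) (fmono b)) w =
  \sum_(s <- enum 'I_n) (if a ++ wd A j i s ++ b == w then 1 else 0)
  + (if j == i then (if a ++ b == w then -1 else 0) else 0).
Proof.
rewrite coef_fmul3 /Defs.rel big_cat big_map /=; congr (_ + _).
by case: (j == i); rewrite ?big_cons ?big_nil //= addr0.
Qed.

Lemma sum1 (k : fieldType) n (P : pred 'I_n) s0 : (forall s, P s = (s == s0)) ->
  \sum_(s <- enum 'I_n) (if P s then (1:k) else 0) = 1.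
Proof.
move=> HP; rewrite big_enum /=. rewrite (bigD1 s0) //= HP eqxx big1 ?addr0 // => s /negbTE.
by rewrite HP => ->.
Qed.

Lemma sum0 (k : fieldType) n (P : pred 'I_n) : (forall s, P s = false) ->
  \sum_(s <- enum 'I_n) (if P s then (1:k) else 0) = 0.
Proof. by move=> HP; rewrite big1_seq // => s _; rewrite HP. Qed.

Lemma sum_nz (k : fieldType) (T : eqType) (r : seq T) (P : pred T) (c : T -> k) :
  \sum_(t <- r) (if P t then c t else 0) != 0 -> exists2 t, t \in r & P t.
Proof.
move=> H; apply/hasP; apply: contraNT H => /hasPn Hn.
by rewrite big1_seq // => t /Hn /negbTE ->.
Qed.

Lemma wd_inj n A (j i : 'I_n) s s' : wd A j i s = wd A j i s' -> s = s'.
Proof.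
rewrite /wd /Mmat /u_mat /tr_mat /star_mat /dag_mat /ustar /rr.
case: A => [[|[|[|a]]] HA] /= [] *.
all: apply/val_inj => /=; have := ltn_ord s; have := ltn_ord s'; lia.
Qed.

Lemma coef_rel (k : fieldType) n A (j i : 'I_n) w :
  coef (@Defs.rel k n A j i) w =
  \sum_(s <- enum 'I_n) (if wd A j i s == w then 1 else 0)
  + (if j == i then (if [::] == w then -1 else 0) else 0).
Proof.
rewrite /coef /Defs.rel big_cat big_map /=; congr (_ + _).
by case: (j == i); rewrite ?big_cons ?big_nil //= addr0.
Qed.

Lemma coef_rel_wd (k : fieldType) n A (j i s0 : 'I_n) :
  coef (@Defs.rel k n A j i) (wd A j i s0) = 1.
Proof.
rewrite coef_rel (@sum1 k n (fun s => wd A j i s == wd A j i s0) s0).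
  by case: (j == i); rewrite addr0.
by move=> s; apply/eqP/eqP => [/wd_inj|->].
Qed.

Lemma dl_false n (x x2 y y2 : sym n) : (rk y < rk x)%N ->
  deglex_le [:: x; x2] [:: y; y2] = false.
Proof.
move=> H; rewrite /deglex_le /deglex_lt /=.
have Hxy : (x == y) = false by apply/negbTE; apply/eqP => E; rewrite E ltnn in H.
have Hl : (rk x < rk y)%N = false by apply/negbTE; rewrite -leqNgt ltnW.
by rewrite eqseq_cons Hxy Hl.
Qed.

Lemma tip_rel (k : fieldType) n A (j i : 'I_n) mr :
  is_tip (coef (@Defs.rel k n A j i)) mr ->
  exists s0, mr = wd A j i s0 /\ forall s, deglex_le (wd A j i s) mr.
Proof.
case=> Hnz Hle.
have Hs : forall s, deglex_le (wd A j i s) mr.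
  by move=> s; apply: Hle; rewrite coef_rel_wd oner_neq0.
move: Hnz; rewrite coef_rel.
case H0: (\sum_(s <- enum 'I_n) (if wd A j i s == mr then (1:k) else 0) == 0).
  rewrite (eqP H0) add0r; case: (j == i); last by rewrite eqxx.
  case: ([::] =P mr) => [Emr _|_]; last by rewrite eqxx.
  by have := Hs j; rewrite -Emr /deglex_le /deglex_lt /=.
move/negbT: H0 => /sum_nz [s0 _ /eqP E] _; exists s0; split => //.
Qed.

Definition code n (x : sym n) : bool * nat * nat := (x.1.1, nat_of_ord x.1.2, nat_of_ord x.2).

Lemma nz_add (k : fieldType) (a b : k) : a + b != 0 -> a != 0 \/ b != 0.
Proof. by case: (eqVneq a 0) => [->|]; [rewrite add0r; right | left]. Qed.

Lemma nz_sub (k : fieldType) (a b : k) : a - b != 0 -> a != 0 \/ b != 0.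
Proof. by move/nz_add => [|]; [left | rewrite oppr_eq0; right]. Qed.

Lemma ite_nz (k : fieldType) (b : bool) (c : k) : (if b then c else 0) != 0 -> b.
Proof. by case: b => //; rewrite eqxx. Qed.

Ltac weq := rewrite /wd /Mmat /star_mat /dag_mat /tr_mat /u_mat /ustar /rr /deglex_le /deglex_lt /=
  ?rev_ordK ?eqseq_cons ?xpair_eqE ?eqxx /= -?val_eqE /=.

Ltac toval := repeat match goal with H : ?a = ?b |- _ => move/(congr1 (@nat_of_ord _)): H => /= H end.

Theorem mainTheorem15 (k : fieldType) (n : nat) (hn : (2 <= n)%N) :
  ~ R_is_groebner k n.
Proof.
move=> HG.
have h0 : (0 < n)%N by lia.
have hN : (n - 1 < n)%N by lia.
have hM : (n - 2 < n)%N by lia.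
pose o0 := Ordinal h0; pose oN := Ordinal hN; pose oM := Ordinal hM.
pose A0 := @Ordinal 4 0 isT; pose A2 := @Ordinal 4 2 isT.
pose u0N : sym n := (false, o0, oN).
pose m : word n := [:: (false,o0,oN); (true,o0,oM); (false,o0,oM)].
pose W0 : word n := [:: (false,o0,oN); (true,o0,oN); (false,o0,oN)].
pose L : seq (k * word n * Ridx n * word n) :=
  [:: (1, [::], (A0,o0,o0), [:: u0N]); (-1, [:: u0N], (A2,oN,oN), [::])].
pose f := fun w => \sum_(t <- L)
        t.1.1.1 * coef (fmul (fmul (fmono t.1.1.2) (@relR k n t.1.2)) (fmono t.2)) w.
have If : inI f by exists L.
have Hf : forall w, f w =
  (\sum_(s <- enum 'I_n) (if [::] ++ wd A0 o0 o0 s ++ [:: u0N] == w then 1 else 0)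
     + (if [::] ++ [:: u0N] == w then -1 else 0))
  - (\sum_(s <- enum 'I_n) (if [:: u0N] ++ wd A2 oN oN s ++ [::] == w then 1 else 0)
     + (if [:: u0N] ++ [::] == w then -1 else 0)).
  move=> w; rewrite /f big_cons big_cons big_nil /relR /= !coef3_rel !eqxx.
  by rewrite mul1r addr0 mulN1r.
have E1 : forall s, ([::] ++ wd A0 o0 o0 s ++ [:: u0N] == m) = false.
  move=> s; unfold m, W0, u0N, A0, A2, o0, oN, oM; weq; apply/negbTE; lia.
have E2 : forall s, ([:: u0N] ++ wd A2 oN oN s ++ [::] == m) = (s == oM).
  move=> s; unfold m, W0, u0N, A0, A2, o0, oN, oM; weq; apply/idP/idP; lia.
have E3 : forall s, ([::] ++ wd A0 o0 o0 s ++ [:: u0N] == W0) = (s == o0).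
  move=> s; unfold m, W0, u0N, A0, A2, o0, oN, oM; weq; apply/idP/idP; lia.
have E4 : forall s, ([:: u0N] ++ wd A2 oN oN s ++ [::] == W0) = (s == oN).
  move=> s; unfold m, W0, u0N, A0, A2, o0, oN, oM; weq; apply/idP/idP; lia.
have fW0 : f W0 = 0.
  rewrite Hf (@sum1 k n _ o0 E3) (@sum1 k n _ oN E4) /=.
  by rewrite subrr.
have Htip : is_tip f m.
  split.
    rewrite Hf (@sum0 k n _ E1) (@sum1 k n _ oM E2) /= /m /= eqseq_cons andbF !add0r addr0.
    by rewrite oppr_eq0 oner_eq0.
  move=> m' Hm'; move: (Hm'); rewrite Hf => /nz_sub [] /nz_add [].
  - move/sum_nz => [s _ /eqP Em'].
    case: (eqVneq s o0) => [Es|Es].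
      have Hw : m' = W0 by rewrite -Em'; apply/eqP; rewrite E3 Es.
      by move: Hm'; rewrite Hw fW0 eqxx.
    rewrite -Em'; unfold m, W0, u0N, A0, A2, o0, oN, oM; weq.
    move: Es; rewrite -val_eqE /= /rk /=; lia.
  - by move/ite_nz => /eqP <-; rewrite /deglex_le /deglex_lt /= orbT.
  - move/sum_nz => [s _ /eqP Em'].
    case: (eqVneq s oN) => [Es|Es].
      have Hw : m' = W0 by rewrite -Em'; apply/eqP; rewrite E4 Es.
      by move: Hm'; rewrite Hw fW0 eqxx.
    rewrite -Em'; unfold m, W0, u0N, A0, A2, o0, oN, oM; weq.
    move: Es; rewrite -val_eqE /= /rk /=; have := ltn_ord s; lia.
  - by move/ite_nz => /eqP <-; rewrite /deglex_le /deglex_lt /= orbT.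
have [[[A j] i] [mr [a [b [Htx Hm]]]]] := HG f m If Htip.
have [s0 [Emr Hs]] := tip_rel Htx; subst mr; clear Htx.
unfold m, W0, u0N, A0, A2, o0, oN, oM in Hm.
case: a Hm => [|y [|y2 a]] Hm.
{ case: A Hs Hm => [[|[|[|[|A]]]] HA] //= Hs Hm; rewrite /wd /Mmat /star_mat /dag_mat /tr_mat /u_mat /ustar /rr /= in Hm;
    case: Hm => *; toval; try lia.
  have := Hs (Ordinal h0); rewrite /wd dl_false // /Mmat /tr_mat /u_mat /rk /= ltn_add2l; nia. }
{ case: A Hs Hm => [[|[|[|[|A]]]] HA] //= Hs Hm; rewrite /wd /Mmat /star_mat /dag_mat /tr_mat /u_mat /ustar /rr /= in Hm;
    case: Hm => *; toval; try lia;
  have := Hs (Ordinal hN); rewrite /wd dl_false // /Mmat /star_mat /dag_mat /u_mat /ustar /rr /rk /=; nia. }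
{ move/(congr1 size): Hm; rewrite /= !size_cat /wd /=; lia. }
Qed.
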